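(* If $G$ is a finite non-cyclic group of prime power order with $\psi'(G)>\frac{19}{43}$, then $G$ is a $2$-group.
   Context: For a finite group $G$, $\psi(G)=\sum_{x\in G} o(x)$ and $\psi'(G)=\psi(G)/\psi(\mathcal{C}_{|G|})$, where $\mathcal{C}_n$ is the cyclic group of order $n$. *)

(* Defs.v *)
From mathcomp Require Import all_boot all_order all_algebra all_fingroup all_solvable.
Set Implicit Arguments. Unset Strict Implicit. Unset Printing Implicit Defensive.

Definition psi (gT : finGroupType) (G : {set gT}) : nat := \sum_(x in G) #[x]%g.

(* psi of the cyclic group C_n of order n (n > 0), realized as the additive
   group 'I_n (which is cyclic of order n). For n = 0 this is psi of the
   trivial group; it is only used with n = #|G| > 0. *)
Definition psi_cyclic (n : nat) : nat := psi [set: 'I_n.-1.+1].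

Definition psi' (gT : finGroupType) (G : {set gT}) : rat :=
  ((psi G)%:R / (psi_cyclic #|G|)%:R)%R.

(* Main.v *)
Require Import Defs.
From mathcomp Require Import all_boot all_order all_algebra all_fingroup all_solvable.
From mathcomp Require Import zify.
Set Implicit Arguments. Unset Strict Implicit.
Import GroupScope.

Lemma layer (gT : finGroupType) (a : gT) p j : prime p -> #[a] = (p^j.+1)%N ->
  (\sum_(x in <[a]> :\: <[a^+p]>) #[x] = (p^j.+1 - p^j) * p^j.+1)%N.
Proof.
move=> pp oa.
have oap : #[a^+p] = (p^j)%N.
  rewrite orderXdiv oa ?expnS ?mulKn ?prime_gt0 //; exact: dvdn_mulr.
rewrite (eq_bigr (fun _ => p^j.+1)%N).
  rewrite sum_nat_const cardsD (setIidPr _); last by rewrite cycle_subG mem_cycle.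
  by rewrite -/#[a] -/#[a^+p] oa oap.
move=> x /setDP [/cycleP [i ->] ni].
rewrite orderXgcd oa.
have: coprime (p^j.+1) i.
  rewrite coprime_pexpl // prime_coprime //; apply/negP => /dvdnP [q iq].
  by move: ni; rewrite iq mulnC expgM mem_cycle.
by rewrite /coprime => /eqP ->; rewrite divn1.
Qed.
Import GroupScope.

Lemma psiC_lb p k : prime p ->
  ((p^k.+2 - p^k.+1) * p^k.+2 + (p^k.+1 - p^k) * p^k.+1 <= psi_cyclic (p^k.+2))%N.
Proof.
move=> pp.
rewrite /psi_cyclic /psi.
set N := (p^k.+2).-1.
have eN : N.+1 = (p^k.+2)%N by rewrite /N prednK // expn_gt0 prime_gt0.
set a := (Zp1 : 'I_N.+1).
have oa : #[a] = (p^k.+2)%N by rewrite order_Zp1.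
have ob : #[a ^+ p] = (p^k.+1)%N.
  rewrite orderXdiv oa ?expnS ?mulKn ?prime_gt0 //; exact: dvdn_mulr.
rewrite Zp_cycle -/a (big_setID <[a^+p]>) /= addnC.
rewrite (setIidPr _); last by rewrite cycle_subG mem_cycle.
rewrite (layer pp oa); apply: leq_add => //.
rewrite (big_setID <[(a^+p)^+p]>) /= (layer pp ob); exact: leq_addl.
Qed.
Lemma a1 p t : 3 <= p -> 0 < t -> 43 * (t * t + (t * p * p - t) * (t * p)) <= 19 * ((t * p * p - t * p) * (t * p * p) + (t * p - t) * (t * p)).
Proof. move=> hp ht. nia. Qed.
Lemma a2 p t : 3 <= p -> 0 < t -> 43 * (t * p * p * t) <= 19 * ((t * p * p - t * p) * (t * p * p) + (t * p - t) * (t * p)).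
Proof. move=> hp ht. nia. Qed.
Lemma ord_le (gT : finGroupType) (G : {group gT}) p k x : prime p -> #|G| = (p^k.+1)%N ->
  ~~ cyclic G -> x \in G -> (#[x] %| p^k)%N.
Proof.
move=> pp oG ncG xG.
have := order_dvdG xG; rewrite oG => /(dvdn_pfactor _ _ pp) [m lem em].
rewrite em dvdn_Pexp2l ?prime_gt1 //.
move: lem; rewrite leq_eqVlt => /orP [/eqP emk|]; last by [].
case/negP: ncG; apply/cyclicP; exists x; apply/eqP; rewrite eq_sym eqEcard.
change #|<[x]>| with #[x]; by rewrite cycle_subG xG em emk oG leqnn.
Qed.

Lemma psiG_ub (gT : finGroupType) (G : {group gT}) p k : prime p -> 3 <= p ->
  #|G| = (p^k.+2)%N -> ~~ cyclic G ->
  (43 * psi G <= 19 * ((p^k.+2 - p^k.+1) * p^k.+2 + (p^k.+1 - p^k) * p^k.+1))%N.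
Proof.
move=> pp p3 oG ncG.
have ox := ord_le pp oG ncG.
have t0 : 0 < p^k by rewrite expn_gt0 prime_gt0.
case: (boolP [exists x in G, #[x] == (p^k.+1)%N]).
  case/exists_inP => x xG /eqP ex.
  have oH : #[x^+p] = (p^k)%N.
    rewrite orderXdiv ex ?expnSr ?mulnK ?prime_gt0 //; exact: dvdn_mull.
  have sHG : <[x^+p]> \subset G by rewrite cycle_subG groupX.
  have ub : (psi G <= p^k * p^k + (p^k.+2 - p^k) * p^k.+1)%N.
    rewrite /psi (big_setID <[x^+p]>) /= (setIidPr sHG).
    apply: leq_add.
      rewrite -oH -sum_nat_const; apply: leq_sum => y yH.
      exact: dvdn_leq (order_gt0 _) (order_dvdG yH).
    have -> : (p^k.+2 - p^k = #|G :\: <[x^+p]>|)%N by rewrite cardsD (setIidPr sHG) oG -/#[x^+p] oH.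
    rewrite -sum_nat_const; apply: leq_sum => y /setDP [yG _].
    by apply: dvdn_leq; [rewrite expn_gt0 prime_gt0 | exact: ox].
  apply: leq_trans (leq_mul (leqnn 43) ub) _.
  rewrite !expnSr; move: (p^k)%N t0 => t t0; exact: a1.
rewrite negb_exists => /forallP nx.
have ub : (psi G <= p^k.+2 * p^k)%N.
  rewrite -oG -sum_nat_const; apply: leq_sum => y yG.
  have := nx y; rewrite yG /= => ny.
  have := ox y yG => /(dvdn_pfactor _ _ pp) [m lem em].
  rewrite em leq_exp2l ?prime_gt1 //.
  move: lem; rewrite leq_eqVlt => /orP [/eqP emk|]; last by [].
  by move: ny; rewrite em emk eqxx.
apply: leq_trans (leq_mul (leqnn 43) ub) _.
rewrite !expnSr; move: (p^k)%N t0 => t t0; exact: a2.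
Qed.

From mathcomp Require Import ring lra.

Theorem corollary3p2 (gT : finGroupType) (G : {group gT}) (p : nat) :
  prime p -> (p.-group G)%g -> ~~ cyclic G ->
  ((19%:R / 43%:R : rat) < psi' G)%R ->
  (2.-group G)%g.
Proof.
move=> pp pG ncG H.
have [p2|pn2] := eqVneq p 2; first by rewrite -p2.
have p3 : 3 <= p by have := prime_gt1 pp; move: pn2; lia.
exfalso.
have oG := card_pgroup pG.
move: oG; case: (logn p #|G|) => [|[|k]] oG.
- case/negP: ncG; rewrite (card1_trivg oG); exact: cyclic1.
- case/negP: ncG; apply: prime_cyclic; by rewrite oG expn1.
have h43 := psiG_ub pp p3 oG ncG.
have hc := psiC_lb k pp.
move: H; rewrite /psi' oG.
set a := psi G; set c := psi_cyclic _.
move: h43 hc; rewrite -/a => h43 hc.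
have c0 : (0 < c)%N.
  apply: leq_trans hc; apply: ltn_addr; by rewrite muln_gt0 subn_gt0 ltn_exp2l ?prime_gt1 ?expn_gt0 ?prime_gt0 ?leqnn.
rewrite Num.Theory.ltr_pdivlMr ?Num.Theory.ltr0n // => H.
have : ((19 * c)%:R < (43 * a)%:R :> rat)%R.
  rewrite !GRing.Theory.natrM; move: H; lra.
rewrite Num.Theory.ltr_nat => h.
have := leq_trans h43 (leq_mul (leqnn 19) hc); rewrite leqNgt h. done.
Qed.
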